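(* Let $n=2k$ and let $r$ be an integer with $1<r<k$ and $\gcd(r,k)=1$. Then $G(x)=\sum_{i=1}^{2^r-1}x^{(i2^{k-r}+1)(2^k-1)+1}$ takes all its values in $\mathbb{F}_{2^k}$, and as an $(n,k)$-function $G:\mathbb{F}_{2^n}\to\mathbb{F}_{2^k}$ it is vectorial bent.
   Context: An $(n,k)$-function $G$ is vectorial bent if for every $\lambda\in\mathbb{F}_{2^k}^*$ the Boolean function $\mathrm{Tr}^k_1(\lambda G(x))$ is bent, i.e. $|\sum_{x\in\mathbb{F}_{2^n}}(-1)^{\mathrm{Tr}^k_1(\lambda G(x))+\mathrm{Tr}^n_1(ax)}|=2^{k}$ for all $a\in\mathbb{F}_{2^n}$, where $\mathrm{Tr}^m_1(x)=\sum_{i=0}^{m-1}x^{2^i}$. *)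

(* Defs.v *)
From HB Require Import structures.
From mathcomp Require Import all_boot all_order all_algebra.
Set Implicit Arguments. Unset Strict Implicit. Unset Printing Implicit Defensive.
Import Order.TTheory GRing.Theory Num.Theory.
Local Open Scope ring_scope.

Definition trace_abs (F : finFieldType) (m : nat) (x : F) : F :=
  \sum_(i < m) x ^+ (2 ^ i).

Definition in_subfield (F : finFieldType) (k : nat) (x : F) : bool :=
  x ^+ (2 ^ k) == x.

(* (-1)^t for t in the prime field {0,1} of a characteristic-2 field. *)
Definition sgn01 (F : finFieldType) (t : F) : int := if t == 0 then 1 else -1.

Definition walsh (F : finFieldType) (n k : nat) (G : F -> F) (lam a : F) : int :=
  \sum_(x : F) sgn01 (trace_abs k (lam * G x) + trace_abs n (a * x)).

Definition vectorial_bent (F : finFieldType) (n k : nat) (G : F -> F) : Prop :=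
  forall lam : F, in_subfield k lam -> lam != 0 ->
  forall a : F, `| walsh n k G lam a | = (2 ^ k)%:Z.

Definition G_prop2 (F : finFieldType) (k r : nat) (x : F) : F :=
  \sum_(1 <= i < 2 ^ r) x ^+ ((i * 2 ^ (k - r) + 1) * (2 ^ k - 1) + 1).

(* Main.v *)
Require Import Defs.
From HB Require Import structures.
From mathcomp Require Import all_boot all_order all_algebra finfield.
From mathcomp Require Import zify ring.
Import GRing.Theory Num.Theory.
Local Open Scope ring_scope.

Section Base.
Variable F : finFieldType.
Variable k : nat.
Hypothesis ch2 : (2 \in [pchar F])%N.
Hypothesis cardF : #|F| = (2 ^ (2 * k))%N.
Hypothesis k_gt0 : (0 < k)%N.

Local Notation q := (2 ^ k)%N.
Local Notation K := (@in_subfield F k).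
Definition cj (x : F) := x ^+ q.
Local Notation T := (@trace_abs F k).

Lemma q_gt1 : (1 < q)%N.
Proof. by rewrite -[1%N](expn0 2) ltn_exp2l. Qed.
Lemma q_gt0 : (0 < q)%N.
Proof. exact: expn_gt0. Qed.

Lemma two0 : (2%:R : F) = 0. Proof. exact: pcharf0 ch2. Qed.
Lemma addrr (x : F) : x + x = 0. Proof. exact: (addrr_pchar2 ch2 x). Qed.
Lemma oppr2 (x : F) : - x = x. Proof. exact: (oppr_pchar2 ch2 x). Qed.
Lemma subr2 (x y : F) : x - y = x + y. Proof. by rewrite oppr2. Qed.

Lemma frob j (x y : F) : (x + y) ^+ (2 ^ j) = x ^+ (2 ^ j) + y ^+ (2 ^ j).
Proof.
elim: j => [|j IH]; first by rewrite expn0 !expr1.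
by rewrite expnSr !exprM IH sqrrD mulr2n addrr addr0.

Qed.

Lemma frob0 j : (0 : F) ^+ (2 ^ j) = 0.
Proof. by rewrite expr0n expn_eq0. Qed.

Lemma frob_sum j (I : Type) (r : seq I) (P : pred I) (f : I -> F) :
  (\sum_(i <- r | P i) f i) ^+ (2 ^ j) = \sum_(i <- r | P i) (f i) ^+ (2 ^ j).
Proof.
exact: (big_morph (fun x : F => x ^+ (2 ^ j)) (frob j) (frob0 j)).
Qed.

Lemma cjD x y : cj (x + y) = cj x + cj y. Proof. exact: frob. Qed.
Lemma cjM x y : cj (x * y) = cj x * cj y. Proof. exact: exprMn. Qed.
Lemma cjV x : cj (x^-1) = (cj x)^-1. Proof. exact: exprVn. Qed.
Lemma cjX x n : cj (x ^+ n) = (cj x) ^+ n. Proof. exact: exprAC. Qed.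
Lemma cj0 : cj 0 = 0. Proof. exact: frob0. Qed.
Lemma cj1 : cj 1 = 1. Proof. exact: expr1n. Qed.
Lemma cj_sum (I : Type) (r : seq I) (P : pred I) (f : I -> F) :
  cj (\sum_(i <- r | P i) f i) = \sum_(i <- r | P i) cj (f i).
Proof. exact: frob_sum. Qed.

Lemma xqq (x : F) : x ^+ (q * q) = x.
Proof. by rewrite -expnD addnn -mul2n -cardF expf_card. Qed.

Lemma cjK x : cj (cj x) = x.
Proof. by rewrite /cj -exprM xqq. Qed.

Lemma KE x : K x = (cj x == x). Proof. by []. Qed.
Lemma KP x : reflect (cj x = x) (K x). Proof. exact: eqP. Qed.

Lemma K0 : K 0. Proof. by apply/KP; rewrite cj0. Qed.
Lemma K1 : K 1. Proof. by apply/KP; rewrite cj1. Qed.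
Lemma KD x y : K x -> K y -> K (x + y).
Proof. by move=> /KP hx /KP hy; apply/KP; rewrite cjD hx hy. Qed.
Lemma KM x y : K x -> K y -> K (x * y).
Proof. by move=> /KP hx /KP hy; apply/KP; rewrite cjM hx hy. Qed.
Lemma KV x : K x -> K (x^-1).
Proof. by move=> /KP hx; apply/KP; rewrite cjV hx. Qed.
Lemma KX x n : K x -> K (x ^+ n).
Proof. by move=> /KP hx; apply/KP; rewrite cjX hx. Qed.
Lemma Ktr x : K (x + cj x).
Proof. by apply/KP; rewrite cjD cjK addrC. Qed.

Lemma Kpow1 y : K y -> y != 0 -> y ^+ (q - 1) = 1.
Proof.
move=> /KP hy y0; apply: (mulIf y0); rewrite mul1r -exprSr subn1 prednK ?q_gt0 //.
Qed.

Lemma T_add x y : T (x + y) = T x + T y.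
Proof. by rewrite /trace_abs -big_split; apply: eq_bigr => i _; rewrite frob. Qed.

Lemma T0 : T 0 = 0.
Proof. by rewrite /trace_abs big1 // => i _; rewrite frob0. Qed.

Lemma trn z : trace_abs (2 * k) z = T (z + cj z).
Proof.
rewrite T_add /trace_abs mul2n -addnn big_split_ord /=; congr (_ + _).
by apply: eq_bigr => i _; rewrite /cj expnD exprM.
Qed.

Lemma T_sq y : K y -> T y ^+ 2 = T y.
Proof.
move=> /KP hy.
have E : \sum_(i < k.+1) y ^+ (2 ^ i) = \sum_(i < k.+1) y ^+ (2 ^ i) by [].
rewrite {1}big_ord_recl big_ord_recr /= expn0 expr1 [y ^+ (2 ^ k)]hy in E.
move: E; rewrite [X in _ = X]addrC => /addrI E.
rewrite /trace_abs -[2%N]/(2 ^ 1)%N frob_sum -{}E.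
by apply: eq_bigr => i _; rewrite -exprM -expnSr.
Qed.

Lemma T_bit y : K y -> T y = 0 \/ T y = 1.
Proof.
move=> Ky; have := T_sq y Ky; rewrite expr2 => /eqP.
rewrite -subr_eq0 -[X in _ - X]mulr1 -mulrBr mulf_eq0 subr_eq0 => /orP[/eqP|/eqP] ->; by [left|right].
Qed.


Lemma addKr2 (x y : F) : x + (x + y) = y.
Proof. by rewrite addrA addrr add0r. Qed.
Lemma addrK2 (x y : F) : x + y + y = x.
Proof. by rewrite -addrA addrr addr0. Qed.

Lemma sgn_flip (b : F) : (b = 0 \/ b = 1) -> sgn01 (b + 1) = - sgn01 b.
Proof.
case=> ->; rewrite /sgn01 ?add0r ?addrr eqxx ?oner_eq0 //=.
Qed.

Lemma exists_notK : {d : F | ~~ K d}.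
Proof.
case: (pickP (fun x => ~~ K x)) => [d Hd | H]; first by exists d.
exfalso.
have allK : forall x, K x by move=> x; have := H x; move/negbFE.
pose p : {poly F} := 'X^q - 'X.
have sizep : size p = q.+1.
  by rewrite size_polyDl ?size_polyXn // size_polyN size_polyX ltnS q_gt1.
have p0 : p != 0 by rewrite -size_poly_eq0 sizep.
have := max_poly_roots p0 (rs := enum F).
rewrite enum_uniq sizep -cardE cardF.
have -> : all (root p) (enum F).
  apply/allP => x _; rewrite /root /p !hornerE.
  by have /KP := allK x; rewrite /cj => ->; rewrite subrr.
move=> /(_ isT isT).
have := q_gt1.
rewrite mul2n -addnn expnD.
move: (2 ^ k)%N => Q; nia.
Qed.

Section Decomp.
Variable δ : F.
Hypothesis notK : ~~ K δ.

Definition dd := δ + cj δ.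
Lemma dd_neq0 : dd != 0.
Proof.
apply: contra notK; rewrite /dd addr_eq0 oppr2 // => /eqP h.
by apply/KP; rewrite -h.
Qed.
Lemma Kdd : K dd. Proof. exact: Ktr. Qed.
Lemma cjδ : cj δ = δ + dd. Proof. by rewrite /dd addKr2. Qed.

Definition tco γ := (γ + cj γ) / dd.
Definition sco γ := γ + tco γ * δ.
Lemma Ktco γ : K (tco γ).
Proof. by apply: KM; [exact: Ktr | apply: KV; exact: Kdd]. Qed.
Lemma tco_mul γ : tco γ * dd = γ + cj γ.
Proof. by rewrite /tco divfK ?dd_neq0. Qed.
Lemma Ksco γ : K (sco γ).
Proof.
apply/KP; rewrite /sco cjD cjM (KP _ (Ktco γ)) cjδ mulrDr tco_mul.
by rewrite [γ + cj γ]addrC addrCA addKr2 addrC.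
Qed.
Lemma dec_id γ : sco γ + tco γ * δ = γ.
Proof. by rewrite /sco addrK2. Qed.
Lemma tco_dec s t : K s -> K t -> tco (s + t * δ) = t.
Proof.
move=> /KP Ks /KP Kt; rewrite /tco cjD cjM Ks Kt addrACA addrr add0r -mulrDr.
by rewrite -/dd mulfK ?dd_neq0.
Qed.
Lemma sco_dec s t : K s -> K t -> sco (s + t * δ) = s.
Proof. by move=> Ks Kt; rewrite /sco tco_dec // addrK2. Qed.

Lemma decomp_big (R : Type) (idx : R) (op : Monoid.com_law idx) (f : F -> R) :
  \big[op/idx]_(γ : F) f γ =
  \big[op/idx]_(s | K s) \big[op/idx]_(t | K t) f (s + t * δ).
Proof.
rewrite (reindex_onto (fun p : F * F => p.1 + p.2 * δ) (fun γ => (sco γ, tco γ))) /=;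
  last by move=> γ _; rewrite dec_id.
rewrite pair_big_dep; apply: eq_bigl => -[s t] /=.
apply/eqP/andP => [[<- <-]|[Ks Kt]]; first by split; [exact: Ksco | exact: Ktco].
by rewrite sco_dec ?tco_dec.
Qed.

End Decomp.


Lemma cardK : #|[set x : F | K x]| = q.
Proof.
have [δ nK] := exists_notK.
have E : #|F| = (#|[set x : F | K x]| * #|[set x : F | K x]|)%N.
  have <- : \sum_(γ : F) 1%N = #|F| by rewrite sum1_card.
  rewrite (decomp_big δ nK).
  under eq_bigr do rewrite sum1dep_card.
  transitivity (\sum_(s | K s) 1 * #|[set x : F | K x]|)%N.
    by apply: eq_bigr => s _; rewrite mul1n.
  by rewrite -big_distrl /= sum1dep_card.
move: E; rewrite cardF mul2n -addnn expnD !mulnn => /eqP.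
by rewrite eqn_exp2r // => /eqP.
Qed.

Lemma size_psum j : size (\sum_(i < j.+1) 'X^(2^i) : {poly F}) = (2^j).+1.
Proof.
elim: j => [|j IH]; first by rewrite big_ord1 expn0 size_polyXn.
rewrite big_ord_recr /= addrC size_polyDl size_polyXn // IH ltnS expnS.
have := expn_gt0 2 j; lia.
Qed.

Lemma exists_T1 : {y : F | K y & T y = 1}.
Proof.
case: (pickP (fun y => K y && (T y == 1))) => [y /andP[Ky /eqP Ty]|H].
  by exists y.
exfalso.
have T0K : forall y, K y -> T y = 0.
  move=> y Ky; case: (T_bit y Ky) => // T1.
  by have := H y; rewrite /= Ky T1 eqxx.
pose p : {poly F} := \sum_(i < k) 'X^(2^i).
have sizep : size p = (2 ^ k.-1).+1.
  by rewrite /p; case: (k) k_gt0 => // k' _; rewrite size_psum.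
have p0 : p != 0 by rewrite -size_poly_eq0 sizep.
have := max_poly_roots p0 (rs := enum [set y : F | K y]).
rewrite enum_uniq sizep -cardE cardK.
have -> : all (root p) (enum [set y : F | K y]).
  apply/allP => y; rewrite mem_enum inE => Ky; rewrite /root /p horner_sum.
  under eq_bigr do rewrite hornerXn.
  by rewrite -/(trace_abs k y) T0K.
move=> /(_ isT isT).
rewrite -{1}(prednK k_gt0) expnS.
have := expn_gt0 2 k.-1; lia.
Qed.

Lemma sumT_K : \sum_(y | K y) sgn01 (T y) = 0.
Proof.
have [y0 Ky0 Ty0] := exists_T1.
set S := LHS.
have : S = - S.
  rewrite {1}/S (reindex_onto (fun y => y + y0) (fun y => y + y0)) /=;
    last by move=> y _; rewrite addrK2.
  rewrite (eq_bigl (fun y => K y)); last first.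
    move=> y /=; rewrite addrK2 eqxx andbT.
    apply/idP/idP => [h|h]; last exact: KD.
    by rewrite -(addrK2 y y0); apply: KD.
  rewrite /S -sumrN; apply: eq_bigr => y Ky.
  by rewrite T_add Ty0 sgn_flip //; apply: T_bit.
move=> h; lia.
Qed.

Lemma char_sum c : K c ->
  \sum_(y | K y) sgn01 (T (y * c)) = if c == 0 then (q%:Z) else 0.
Proof.
move=> Kc; case: eqP => [-> | /eqP c0].
  under eq_bigr do rewrite mulr0 T0 /sgn01 eqxx.
  rewrite (eq_bigl (fun y => y \in [set y : F | K y])); last by move=> y; rewrite inE.
  by rewrite sumr_const cardK -natz.
transitivity (\sum_(y | K y) sgn01 (T y)); last by rewrite sumT_K.
rewrite [RHS](reindex_onto (fun j => j * c) (fun y => y / c)) /=;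
  last by move=> y _; rewrite divfK.
apply: eq_bigl => y; rewrite mulfK // eqxx andbT.
apply/idP/idP => [h|h]; first exact: KM.
by rewrite -(mulfK c0 y); apply: KM => //; apply: KV.
Qed.




Section Main.
Variable r : nat.
Hypothesis r_gt1 : (1 < r)%N.
Hypothesis r_lt_k : (r < k)%N.
Hypothesis crk : coprime r k.

Local Notation m := (2 ^ r)%N.
Local Notation p := (2 ^ (k - r))%N.
Local Notation G := (@G_prop2 F k r).

Lemma mp : (m * p = q)%N.
Proof. by rewrite -expnD subnKC // ltnW. Qed.
Lemma m_gt1 : (1 < m)%N.
Proof. by rewrite -[1%N](expn0 2) ltn_exp2l // ltnW. Qed.

Lemma fix_mul b c (t : F) : t ^+ (2 ^ b) = t -> t ^+ (2 ^ (b * c)) = t.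
Proof.
move=> h; elim: c => [|c IH]; first by rewrite muln0 expn0 expr1.
by rewrite mulnS expnD mulnC exprM IH h.
Qed.

Lemma fix_gcd (t : F) : t ^+ m = t -> t ^+ q = t -> t ^+ 2 = t.
Proof.
move=> hr hk.
have [a _ /dvdnP [c hc]] := Bezoutl r k_gt0.
have g1 : gcdn k r = 1%N by rewrite gcdnC; apply/eqP.
rewrite g1 in hc.
have h1 : t ^+ (2 ^ (1 + a * r)) = t by rewrite hc mulnC fix_mul.
by move: h1; rewrite expnD expn1 mulnC exprM mulnC fix_mul.
Qed.

Lemma pow_inj z w : K z -> K w -> z != 0 -> w != 0 ->
  z ^+ (m - 1) = w ^+ (m - 1) -> z = w.
Proof.
move=> Kz Kw z0 w0 h.
pose t := z / w.
have Kt : K t by apply: KM => //; apply: KV.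
have t0 : t != 0 by rewrite mulf_neq0 ?invr_eq0.
have t1 : t ^+ (m - 1) = 1 by rewrite /t exprMn exprVn h divff // expf_neq0.
have tm : t ^+ m = t by rewrite -(subnK (ltnW m_gt1)) exprD t1 mul1r expr1.
have t2 : t ^+ 2 = t by apply: fix_gcd => //; apply/KP.
have : t = 1.
  by apply: (mulIf t0); rewrite mul1r -expr2.
by move=> h1; rewrite -[z](divfK w0) -/t h1 mul1r.
Qed.

Lemma pow_surj c : K c -> c != 0 -> exists2 z, K z && (z != 0) & z ^+ (m - 1) = c.
Proof.
move=> Kc c0.
pose A := [set z : F | K z && (z != 0)].
pose f := fun z : F => z ^+ (m - 1).
have sub : f @: A \subset A.
  apply/subsetP => y /imsetP [z]; rewrite inE => /andP [Kz z0] ->.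
  by rewrite inE KX // expf_neq0.
have cardE : #|f @: A| = #|A|.
  apply: card_in_imset => z w; rewrite !inE => /andP[Kz z0] /andP[Kw w0].
  exact: pow_inj.
have /eqP eqA : f @: A == A by rewrite eqEcard sub cardE leqnn.
have : c \in f @: A by rewrite eqA inE Kc c0.
by case/imsetP => z zA ->; exists z; rewrite inE in zA.
Qed.

Definition S (v : F) := \sum_(1 <= i < m) v ^+ i.

Lemma G_form x : G x = x * x ^+ (q - 1) * S ((x ^+ (q - 1)) ^+ p).
Proof.
rewrite /G_prop2 /S mulr_sumr; apply: eq_bigr => i _.
rewrite exprD expr1 mulnC exprM exprD expr1 mulnC exprM mulrC mulrA.
by rewrite mulrAC.
Qed.

Lemma G0 : G 0 = 0.
Proof. by rewrite G_form mul0r mul0r. Qed.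

Section NZ.
Variable x : F.
Hypothesis x0 : x != 0.
Let u := x ^+ (q - 1).
Let v := u ^+ p.

Lemma u_neq0 : u != 0. Proof. exact: expf_neq0. Qed.
Lemma v_neq0 : v != 0. Proof. exact/expf_neq0/u_neq0. Qed.

Lemma uq1 : u ^+ q.+1 = 1.
Proof.
apply: (mulIf x0); rewrite mul1r /u -exprM -exprSr.
have -> : ((q - 1) * q.+1).+1 = (q * q)%N.
  have := q_gt0; move: (2 ^ k)%N => Q; nia.
exact: xqq.
Qed.

Lemma cj_x : cj x = x * u.
Proof. by rewrite /cj /u -exprS subn1 prednK ?q_gt0. Qed.

Lemma cj_u : cj u = u^-1.
Proof.
apply: (mulIf u_neq0); rewrite mulVf ?u_neq0 // /cj -exprSr; exact: uq1.
Qed.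

Lemma vm : v ^+ m = u^-1.
Proof. by rewrite /v -exprM mulnC mp -cj_u. Qed.

Lemma cj_v : cj v = v^-1.
Proof. by rewrite /v cjX cj_u exprVn. Qed.

Lemma cjS : cj (S v) = u * S v.
Proof.
rewrite /S cj_sum mulr_sumr.
under eq_bigr do rewrite cjX cj_v exprVn.
rewrite big_nat_rev /=; apply: eq_big_nat => i /andP [i1 im].
have -> : (1 + m - i.+1 = m - i)%N by rewrite add1n subSS.
have vm' : v ^+ (m - i) * v ^+ i = u^-1 by rewrite -exprD subnK ?vm // ltnW.
apply: (mulIf (expf_neq0 (m - i) v_neq0)); rewrite mulVf ?expf_neq0 ?v_neq0 //.
by rewrite mulrAC -mulrA vm' mulfV ?u_neq0.
Qed.

Lemma KG_nz : K (G x).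
Proof.
apply/KP; rewrite G_form -/u -/v !cjM cj_x cj_u cjS.
by rewrite mulfK ?u_neq0 // mulrA.
Qed.

End NZ.

Lemma KG x : K (G x).
Proof.
have [->|x0] := eqVneq x 0; first by rewrite G0 K0.
exact: KG_nz.
Qed.


Lemma add_eq0_2 (x y : F) : x + y = 0 -> x = y.
Proof. by move/eqP; rewrite addr_eq0 oppr2 => /eqP. Qed.

Lemma mulrn_m1 (x : F) : x *+ (m - 1) = x.
Proof.
apply: add_eq0_2; rewrite -mulrSr subn1 prednK ?expn_gt0 //.
by case: r r_gt1 => // r' _; rewrite expnS mulrnA mulr2n addrr mul0rn.
Qed.

Lemma geom (w c : F) n : (0 < n)%N ->
  (w + c) * (\sum_(1 <= i < n) c ^+ i * w ^+ (n - i)) = c * w ^+ n + c ^+ n * w.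
Proof.
elim: n => [//|n IH] _.
have [->|n0] := posnP n.
  by rewrite big_geq // mulr0 expr1 mulrC addrr.
rewrite big_nat_recr //= subSnn expr1.
have -> : \sum_(1 <= i < n) c ^+ i * w ^+ (n.+1 - i) =
          w * \sum_(1 <= i < n) c ^+ i * w ^+ (n - i).
  rewrite mulr_sumr; apply: eq_big_nat => i /andP [_ hi].
  by rewrite subSn ?(ltnW hi) // exprS mulrCA.
rewrite mulrDr mulrCA IH // !exprS.
set cn := c ^+ n; set wn := w ^+ n.
have -> : w * (c * wn + cn * w) + (w + c) * (cn * w) =
          c * (w * wn) + c * cn * w + (cn * w * w + cn * w * w) by ring.
by rewrite addrr addr0.
Qed.

Section Lam.
Variable lam a : F.
Hypothesis Klam : K lam.
Hypothesis lam0 : lam != 0.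

Definition cc x := lam * G x + (a * x + cj (a * x)).
Definition P' w := lam * (\sum_(1 <= i < m) (cj w) ^+ i * w ^+ (m - i))
  + a * (cj w) ^+ m + cj a * w ^+ m.
Definition alpha := lam + (a + cj a).

Lemma walsh_eq : walsh (2 * k) k G lam a = \sum_(x : F) sgn01 (T (cc x)).
Proof. by apply: eq_bigr => x _; rewrite trn -T_add. Qed.

Lemma G_hom y x : K y -> y != 0 -> G (y * x) = y * G x.
Proof.
move=> Ky y0; rewrite /G_prop2 mulr_sumr; apply: eq_bigr => i _.
by rewrite exprMn exprD expr1 mulnC exprM Kpow1 // expr1n mul1r.
Qed.

Lemma cc_hom y x : K y -> y != 0 -> cc (y * x) = y * cc x.
Proof.
move=> Ky y0; rewrite /cc G_hom // [a * (y * x)]mulrCA [cj (y * _)]cjM (KP _ Ky).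
ring.
Qed.

Lemma Kcc x : K (cc x).
Proof. by apply: KD; [apply: KM => //; apply: KG | apply: Ktr]. Qed.

Lemma cc0 : cc 0 = 0.
Proof. by rewrite /cc G0 !mulr0 cj0 !addr0. Qed.


Lemma cardKstar : #|[set y : F | K y && (y != 0)]| = (q - 1)%N.
Proof.
have h := cardK; rewrite (cardsD1 0) inE K0 add1n in h.
by rewrite -h subn1 /=; apply: eq_card => y; rewrite !inE andbC.
Qed.

Lemma walsh_count :
  (\sum_(x : F) sgn01 (T (cc x))) *+ (q - 1) =
  ((q * \sum_(x : F) ((cc x == 0%R) : nat))%N)%:Z - ((q * q)%N)%:Z.
Proof.
set W := \sum_(x : F) _.
rewrite -cardKstar -sumr_const.
transitivity (\sum_(y in [set y : F | K y && (y != 0)]) \sum_(x : F) sgn01 (T (y * cc x))).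
  apply: eq_bigr => y; rewrite inE => /andP [Ky y0].
  rewrite /W (reindex_inj (mulfI y0)) /=; by apply: eq_bigr => x _; rewrite cc_hom.
rewrite exchange_big /=.
transitivity (\sum_(x : F) ((if cc x == 0 then q%:Z else 0) - 1)).
  apply: eq_bigr => x _; rewrite -(char_sum (cc x) (Kcc x)) (bigD1 0 K0) /= mul0r T0.
  have -> : sgn01 (0 : F) = 1 by rewrite /sgn01 eqxx.
  rewrite addrC addrK; apply: eq_bigl => y; rewrite inE.
  by [].
rewrite sumrB.
have -> : \sum_(x : F) (1 : int) = ((q * q)%N)%:Z.
  by rewrite sumr_const cardF mul2n -addnn expnD -natz.
congr (_ - _).
rewrite big_distrr /= (big_morph Posz PoszD (erefl (Posz 0))); apply: eq_bigr => x _.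
by case: (cc x == 0); rewrite ?muln1 ?muln0.
Qed.

Lemma cP x : (cc x == 0) = (P' (x ^+ p) == 0).
Proof.
have [->|x0] := eqVneq x 0.
  rewrite cc0 eqxx expr0n expn_eq0 /= /P' cj0.
  rewrite big_nat_cond big1 => [|i /andP[/andP[i1 _] _]]; last first.
    by rewrite expr0n gtn_eqF // mul0r.
  by rewrite expr0n expn_eq0 /= !mulr0 !addr0 eqxx.
set u := x ^+ (q - 1).
set v := u ^+ p.
set w := x ^+ p.
have w0 : w != 0 by apply: expf_neq0.
have u0 : u != 0 by apply: u_neq0.
have wv : w ^+ (q - 1) = v by rewrite /w /v /u exprAC.
have cjw : cj w = w * v by rewrite (cj_x w) wv.
pose Q := lam * S v + a * v ^+ m + cj a.
have e1 : cc x = x * u * Q.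
  rewrite /cc G_form -/u -/v cjM (cj_x x) -/u /Q (vm x x0) -/u.
  rewrite !mulrDr [x * u * (a / u)]mulrCA mulfK // [cj a * _]mulrC.
  by rewrite mulrCA addrA.
have e2 : P' w = w ^+ m * Q.
  rewrite /P' cjw /Q /S.
  have -> : \sum_(1 <= i < m) (w * v) ^+ i * w ^+ (m - i) =
            w ^+ m * \sum_(1 <= i < m) v ^+ i.
    rewrite mulr_sumr; apply: eq_big_nat => i /andP[_ hi].
    by rewrite exprMn mulrAC -exprD (subnKC (ltnW hi)).
  rewrite exprMn; move: (\sum_(1 <= i < m) v ^+ i) (v ^+ m) (w ^+ m) (cj a) => sv vm wm ca.
  ring.
rewrite e1 e2 !mulf_eq0 (negbTE x0) (negbTE u0) expf_eq0 (negbTE w0) andbF.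
by [].
Qed.

Lemma inj_p : injective (fun x : F => x ^+ p).
Proof.
move=> x y /= /eqP; rewrite -subr_eq0 subr2 -frob expf_eq0 => /andP[_ /eqP].
exact: add_eq0_2.
Qed.

Lemma Zc_eq : \sum_(x : F) ((cc x == 0%R) : nat) = \sum_(w : F) ((P' w == 0%R) : nat).
Proof.
rewrite [RHS](reindex_inj inj_p) /=; apply: eq_bigr => x _; by rewrite cP.
Qed.

Lemma P'_K s : K s -> P' s = alpha * s ^+ m.
Proof.
move=> /KP Ks; rewrite /P' Ks.
have -> : \sum_(1 <= i < m) s ^+ i * s ^+ (m - i) = s ^+ m *+ (m - 1).
  rewrite -sumr_const_nat; apply: eq_big_nat => i /andP[_ hi].
  by rewrite -exprD (subnKC (ltnW hi)).
rewrite mulrn_m1 /alpha; move: (s ^+ m) (cj a) => sm ca; ring.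
Qed.

Lemma P'_hom t w : K t -> P' (t * w) = t ^+ m * P' w.
Proof.
move=> /KP Kt; rewrite /P' cjM Kt.
have -> : \sum_(1 <= i < m) (t * cj w) ^+ i * (t * w) ^+ (m - i) =
          t ^+ m * \sum_(1 <= i < m) (cj w) ^+ i * w ^+ (m - i).
  rewrite mulr_sumr; apply: eq_big_nat => i /andP[_ hi].
  rewrite !exprMn mulrACA -exprD (subnKC (ltnW hi)) //.
rewrite !exprMn; move: (\sum_(1 <= i < m) (cj w) ^+ i * w ^+ (m - i)) (t ^+ m)
  (cj w ^+ m) (w ^+ m) (cj a) => sv tm cwm wm ca.
ring.
Qed.

Lemma Eid w : (w + cj w) * P' w =
  lam * (cj w * w ^+ m + (cj w) ^+ m * w) + (w + cj w) * (a * (cj w) ^+ m + cj a * w ^+ m).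
Proof.
rewrite /P' -addrA mulrDr mulrCA geom ?expn_gt0 //.
Qed.

Lemma cnt (P Q : pred F) : \sum_(z | P z) ((Q z) : nat) = #|[set z | P z && Q z]|.
Proof.
rewrite -sum1dep_card big_mkcondr /=; apply: eq_bigr => z _; by case: (Q z).
Qed.

Section Del.
Variable δ : F.
Hypothesis nK : ~~ K δ.
Local Notation d := (dd δ).

Definition Acoef := d * alpha.
Definition Bcoef := lam * (δ ^+ m + (cj δ) ^+ m).
Definition Ccoef := lam * (cj δ * δ ^+ m + δ * (cj δ) ^+ m)
   + d * (a * (cj δ) ^+ m + cj a * δ ^+ m).
Definition Rf z := Acoef * z ^+ m + Bcoef * z + Ccoef.

Lemma R_eq z : K z -> d * P' (z + δ) = Rf z.
Proof.
move=> Kz.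
have cjz : cj (z + δ) = z + cj δ by rewrite cjD (KP _ Kz).
have hd : (z + δ) + (z + cj δ) = d by rewrite addrACA addrr add0r.
rewrite -[in LHS]hd -cjz Eid cjz hd !frob.
rewrite /Rf /Acoef /Bcoef /Ccoef /alpha /dd.
move: (z ^+ m) => zm; move: (δ ^+ m) => dm; move: (cj δ ^+ m) => cdm.
move: (cj δ) => cd; move: (cj a) => ca.
rewrite -[RHS]addr0 -(addrr (lam * (z * zm))); ring.
Qed.

Lemma KA : K Acoef.
Proof. by apply: KM; [exact: Kdd | apply: KD => //; exact: Ktr]. Qed.
Lemma BcoefE : Bcoef = lam * d ^+ m.
Proof. by rewrite /Bcoef /dd frob. Qed.
Lemma KB : K Bcoef.
Proof. by rewrite BcoefE; apply: KM => //; apply: KX; exact: Kdd. Qed.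
Lemma B0 : Bcoef != 0.
Proof. by rewrite BcoefE mulf_neq0 // expf_neq0 // dd_neq0. Qed.
Lemma KC : K Ccoef.
Proof.
have e1 : cj (cj δ * δ ^+ m) = δ * (cj δ) ^+ m by rewrite cjM cjK cjX.
have e2 : cj (a * (cj δ) ^+ m) = cj a * δ ^+ m by rewrite cjM cjX cjK.
rewrite /Ccoef -e1 -e2; apply: KD; apply: KM; try exact: Ktr; try done.
Qed.

Lemma tline t : K t -> t != 0 ->
  \sum_(s | K s) ((P' (s + t * δ) == 0) : nat) = \sum_(z | K z) ((Rf z == 0) : nat).
Proof.
move=> Kt t0.
rewrite (reindex_onto (fun z => z * t) (fun s => s / t)) /=; last first.
  by move=> s _; rewrite divfK.
rewrite (eq_bigl (fun z => K z)); last first.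
  move=> z /=; rewrite mulfK // eqxx andbT.
  apply/idP/idP => [h|h]; last exact: KM.
  by rewrite -(mulfK t0 z); apply: KM => //; apply: KV.
apply: eq_bigr => z Kz.
have -> : z * t + t * δ = t * (z + δ) by rewrite mulrDr mulrC.
rewrite P'_hom // -(R_eq z Kz) !mulf_eq0 expf_eq0 (negbTE t0) (negbTE (dd_neq0 δ nK)).
by rewrite andbF.
Qed.


Local Notation NR := (\sum_(z | K z) ((Rf z == 0) : nat)).

Lemma Zw_split : \sum_(w : F) ((P' w == 0) : nat) =
  addn (\sum_(s | K s) ((alpha * s ^+ m == 0)%R : nat)) ((q - 1) * NR)%N.
Proof.
rewrite (decomp_big δ nK) exchange_big /= (bigD1 0 K0) /=.
congr (_ + _)%N.
  by apply: eq_bigr => s Ks; rewrite mul0r addr0 P'_K.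
rewrite (eq_bigr (fun _ => NR)); last by move=> t /andP[Kt t0]; apply: tline.
rewrite (eq_bigl (fun t => t \in [set t | K t && (t != 0)])) ?sum_nat_const ?cardKstar //.
by move=> t; rewrite inE.
Qed.

Lemma A0_val : \sum_(s | K s) ((alpha * s ^+ m == 0) : nat) = if alpha == 0 then q else 1%N.
Proof.
case: eqP => [->|/eqP al0].
  under eq_bigr do rewrite mul0r eqxx.
  by rewrite sum1dep_card cardK.
rewrite cnt.
have -> : [set z | K z && (alpha * z ^+ m == 0)] = [set 0].
  apply/setP => z; rewrite !inE mulf_eq0 (negbTE al0) expf_eq0 expn_gt0 /=.
  by case: eqP => [->|]; rewrite ?K0 ?andbF.
by rewrite cards1.
Qed.

Lemma NR_al0 : alpha = 0 -> NR = 1%N.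
Proof.
move=> al.
have hA : Acoef = 0 by rewrite /Acoef al mulr0.
rewrite cnt.
have -> : [set z | K z && (Rf z == 0)] = [set Ccoef / Bcoef].
  apply/setP => z; rewrite !inE /Rf hA mul0r add0r.
  have -> : (Bcoef * z + Ccoef == 0) = (z == Ccoef / Bcoef).
    apply/eqP/eqP => [h | ->].
      by rewrite -(add_eq0_2 _ _ h) [Bcoef * z]mulrC mulfK // B0.
    by rewrite mulrC divfK ?B0 // addrr.
  case: eqP => [->|]; rewrite ?andbF ?andbT //.
  by apply: KM; [exact: KC | apply: KV; exact: KB].
by rewrite cards1.
Qed.

Lemma NR_al : alpha != 0 -> NR = 0%N \/ NR = 2%N.
Proof.
move=> al.
have A0 : Acoef != 0 by rewrite mulf_neq0 // dd_neq0.
have [z0 /andP[Kz0 z00] hz0] : exists2 z, K z && (z != 0) & z ^+ (m - 1) = Bcoef / Acoef.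
  apply: pow_surj; first by apply: KM; [exact: KB | apply: KV; exact: KA].
  by rewrite mulf_neq0 ?invr_eq0 // B0.
have mS : forall y : F, y ^+ m = y ^+ (m - 1) * y.
  by move=> y; rewrite -exprSr subn1 prednK ?expn_gt0.
have kz0 : Acoef * z0 ^+ m + Bcoef * z0 = 0.
  by rewrite mS hz0 mulrA mulrCA divff // mulr1 addrr.
have key : forall y, K y -> Acoef * y ^+ m + Bcoef * y = 0 -> y = 0 \/ y = z0.
  move=> y Ky h; case: (eqVneq y 0) => [->|y0]; [by left | right].
  apply: pow_inj => //; rewrite hz0.
  have := add_eq0_2 _ _ h; rewrite mS mulrA => /(mulIf y0) <-.
  by rewrite mulrC mulKf.
rewrite cnt.
case: (pickP (fun z => K z && (Rf z == 0))) => [z1 /andP[Kz1 /eqP Rz1] | none].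
  right.
  have -> : [set z | K z && (Rf z == 0)] = [set z1; z1 + z0].
    apply/setP => z; rewrite !inE; apply/idP/idP.
      move/andP => [Kz /eqP Rz].
      have e : Acoef * (z + z1) ^+ m + Bcoef * (z + z1) + (Ccoef + Ccoef) = Rf z + Rf z1.
        by rewrite frob /Rf; ring.
      rewrite addrr addr0 Rz Rz1 addr0 in e.
      case: (key _ (KD _ _ Kz Kz1) e) => [h|h].
        by rewrite (add_eq0_2 _ _ h) eqxx.
      by rewrite -h addrCA addrr addr0 eqxx orbT.
    move/orP => [/eqP -> | /eqP ->]; first by rewrite Kz1 Rz1 eqxx.
    have e : Rf (z1 + z0) = Rf z1 + (Acoef * z0 ^+ m + Bcoef * z0).
      by rewrite /Rf frob; ring.
    by rewrite KD // e Rz1 kz0 addr0 eqxx.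
  rewrite cards2.
  suff -> : z1 != z1 + z0 by [].
  apply/eqP => h; have := congr1 (fun x => x - z1) h; rewrite /= subrr addrC addKr => h0.
  by move: z00; rewrite -h0 eqxx.
left.
have -> : [set z | K z && (Rf z == 0)] = set0.
  by apply/setP => z; rewrite !inE; exact: none.
by rewrite cards0.
Qed.
End Del.

Lemma Zc_val : \sum_(x : F) ((cc x == 0%R) : nat) = 1%N \/
  \sum_(x : F) ((cc x == 0%R) : nat) = (q + (q - 1))%N.
Proof.
have [δ nK] := exists_notK.
rewrite Zc_eq (Zw_split δ nK) A0_val.
case: (eqVneq alpha 0) => al.
  by right; rewrite (NR_al0 δ nK al) muln1.

case: (NR_al δ nK al) => ->; [left | right]; first by rewrite muln0 addn0.
have := q_gt0; lia.
Qed.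

Lemma walsh_abs : `| walsh (2 * k) k G lam a | = (q%:Z).
Proof.
rewrite walsh_eq.
have := walsh_count; have := Zc_val.
move: (\sum_(x : F) ((cc x == 0%R) : nat)) => Z.
move: (\sum_(x : F) sgn01 (T (cc x))) => W.
have := q_gt1.
move: (2 ^ k)%N => Q hQ hZ hW.
case: hZ hW => -> hW; nia.
Qed.
End Lam.
End Main.
End Base.

Theorem proposition2 (F : finFieldType) (k r : nat) :
  (2 \in [pchar F])%N -> #|F| = (2 ^ (2 * k))%N ->
  (1 < r)%N -> (r < k)%N -> coprime r k ->
  (forall x : F, in_subfield k (G_prop2 k r x)) /\
  @vectorial_bent F (2 * k) k (@G_prop2 F k r).
Proof.
move=> ch2 cardF r1 rk crk.
have k0 : (0 < k)%N by apply: leq_ltn_trans rk.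
split; first exact: (KG F k ch2 cardF k0 r r1 rk crk).
move=> lam Klam lam0 a.
exact: (walsh_abs F k ch2 cardF k0 r r1 rk crk lam a Klam lam0).
Qed.
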